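(* Let $G$ be a monomer graph with boundary atoms $v_0,v_{n-1}$, $G^p$ its polymer graph and $G^*$ its induced star-linking graph, all with the same initial node features, and fix an integer $d_{thres}\ge 1$. Assume that the graph distance in $G$ between $v_0$ and $v_{n-1}$ is larger than $2d_{thres}-1$. If a network consists of localized graph attention layers (with threshold $d_{thres}$), nodewise transformations, and concludes with a mean pooling, then its output on $G^p$ is identical to its output on $G^*$.
   Context: A monomer graph is $G=(V,E,\mathbf{X})$ with atoms $V=\{v_0,\dots,v_{n-1}\}$, bonds $E$, features $\mathbf{x}_i\in\mathbb{R}^d$ of $v_i$, and boundary atoms $v_0,v_{n-1}$. The polymer graph $G^p$ has nodes $v^p_i$, $i\in\mathbb{Z}$, with $v^p_i$ carrying the features of $v_{i\bmod n}$; its edges are $(v^p_{kn+a},v^p_{kn+b})$ for every $k\in\mathbb{Z}$ and every bond $(v_a,v_b)\in E$, plus $(v^p_{kn-1},v^p_{kn})$ for every $k\in\mathbb{Z}$. The induced star-linking graph $G^*$ has node set $V$, edge set $E\cup\{(v_0,v_{n-1})\}$ and the same features. Localized graph attention (LGA) with threshold $d_{thres}$: with learnable $\mathbf{W}^Q,\mathbf{W}^K,\mathbf{W}^V\in\mathbb{R}^{d\times d}$, set $\mathbf{q}_j=\mathbf{W}^Q\mathbf{x}_j$, $\mathbf{k}_i=\mathbf{W}^K\mathbf{x}_i$, $\mathbf{v}_i=\mathbf{W}^V\mathbf{x}_i$; for nodes $i,j$ with graph distance $d_{ij}$ and a shortest path $\mathbf{p}_{ij}$, the attention logit is $\mathbf{k}_i^T\mathbf{q}_j/\sqrt{d}+f_{dist}(d_{ij})+f_{path}(\mathbf{p}_{ij})$,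 where $f_{dist}, f_{path}$ are fixed scalar-valued functions ($f_{path}$ depending only on the node/edge attributes along the path); the weights $\hat A_{ij}$ are the softmax of these logits over the nodes $i$ with $d_{ij}<d_{thres}$ (and $\hat A_{ij}=0$ if $d_{ij}\ge d_{thres}$); the new feature of $j$ is $\mathbf{y}_j=\sum_i \hat A_{ij}\mathbf{v}_i$. A nodewise transformation applies a fixed function to each node feature independently (e.g. residual connections, layer normalization, feed-forward networks). Layers are applied identically on both graphs. Node features on $G^p$ remain $n$-periodic, and mean pooling on $G^p$ is the average over one period $v^p_0,\dots,v^p_{n-1}$; on $G^*$ it is the average over all nodes. *)

(* Defs.v *)
From HB Require Import structures.
From mathcomp Require Import all_boot all_order all_algebra.
From mathcomp Require Import all_classical all_reals all_analysis.
Set Implicit Arguments. Unset Strict Implicit. Unset Printing Implicit Defensive.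
Import Order.TTheory GRing.Theory Num.Theory.
Local Open Scope classical_set_scope.
Local Open Scope ring_scope.

Fixpoint chainP {V : Type} (adj : V -> V -> Prop) (u : V) (q : seq V) : Prop :=
  match q with
  | [::] => True
  | w :: q' => adj u w /\ chainP adj w q'
  end.

Definition is_walk {V : Type} (adj : V -> V -> Prop) (i j : V) (p : seq V) : Prop :=
  match p with
  | [::] => False
  | u :: q => u = i /\ last u q = j /\ chainP adj u q
  end.

Definition walk_length {V : Type} (p : seq V) : nat := (size p).-1.

Definition dist_lt {V : Type} (adj : V -> V -> Prop) (t : nat) (i j : V) : Prop :=
  exists p, is_walk adj i j p /\ (walk_length p < t)%N.

(* m < d(i, j) (with d(i,j) = +infinity when i, j are disconnected) *)
Definition dist_gt {V : Type} (adj : V -> V -> Prop) (m : nat) (i j : V) : Prop :=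
  forall p, is_walk adj i j p -> (m < walk_length p)%N.

Definition is_gdist {V : Type} (adj : V -> V -> Prop) (i j : V) (d : nat) : Prop :=
  (exists p, is_walk adj i j p /\ walk_length p = d) /\
  (forall p, is_walk adj i j p -> (d <= walk_length p)%N).

(* the graph distance (only meaningful for connected pairs) *)
Definition gdist {V : Type} (adj : V -> V -> Prop) (i j : V) : nat :=
  xget 0%N [set d | is_gdist adj i j d].

Definition is_shortest_path {V : Type} (adj : V -> V -> Prop) (i j : V) (p : seq V) :=
  is_walk adj i j p /\ walk_length p = gdist adj i j.

Definition path_edges {V EA : Type} (ea : V -> V -> EA) (p : seq V) : seq EA :=
  [seq ea e.1 e.2 | e <- zip p (behead p)].

Section Network.
Variables (R : realType) (d : nat) (NA EA : Type).

(* One LGA layer on a graph with node type V: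
   adj: adjacency, na/ea: node/edge attributes (used by f_path),
   sel i j: the chosen shortest path p_ij (from i to j), t = d_thres. *)
Definition lga {V : choiceType} (adj : V -> V -> Prop) (na : V -> NA)
  (ea : V -> V -> EA) (sel : V -> V -> seq V) (t : nat)
  (WQ WK WV : 'M[R]_d) (fdist : nat -> R) (fpath : seq NA -> seq EA -> R)
  (x : V -> 'cV[R]_d) : V -> 'cV[R]_d :=
  fun j =>
    let logit i := ((WK *m x i)^T *m (WQ *m x j)) 0 0 / Num.sqrt (d%:R)
                   + fdist (gdist adj i j)
                   + fpath (map na (sel i j)) (path_edges ea (sel i j)) in
    let Nj := [set i | dist_lt adj t i j] in
    (\sum_(i \in Nj) expR (logit i))^-1 *:
      \sum_(i \in Nj) (expR (logit i) *: (WV *m x i)).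

Inductive layer : Type :=
  | LGA_layer of 'M[R]_d & 'M[R]_d & 'M[R]_d & (nat -> R) & (seq NA -> seq EA -> R)
  | Nodewise_layer of ('cV[R]_d -> 'cV[R]_d).

Definition apply_layer {V : choiceType} (adj : V -> V -> Prop) (na : V -> NA)
  (ea : V -> V -> EA) (sel : V -> V -> seq V) (t : nat) (l : layer)
  (x : V -> 'cV[R]_d) : V -> 'cV[R]_d :=
  match l with
  | LGA_layer WQ WK WV fd fp => lga adj na ea sel t WQ WK WV fd fp x
  | Nodewise_layer f => fun v => f (x v)
  end.

Definition run_layers {V : choiceType} (adj : V -> V -> Prop) (na : V -> NA)
  (ea : V -> V -> EA) (sel : V -> V -> seq V) (t : nat) (ls : seq layer)
  (x : V -> 'cV[R]_d) : V -> 'cV[R]_d :=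
  foldl (fun y l => apply_layer adj na ea sel t l y) x ls.

End Network.

(* The monomer has n.+1 atoms 'I_n.+1; v_0 = ord0, v_{last} = ord_max. *)

Definition mono_adj (n : nat) (E : rel 'I_n.+1) (a b : 'I_n.+1) : Prop :=
  E a b \/ E b a.

Definition star_adj (n : nat) (E : rel 'I_n.+1) (a b : 'I_n.+1) : Prop :=
  mono_adj E a b \/ (a = ord0 /\ b = ord_max) \/ (a = ord_max /\ b = ord0).

(* polymer graph G^p on nodes v^p_u, u : int *)
Definition poly_adj (n : nat) (E : rel 'I_n.+1) (u v : int) : Prop :=
  (exists (k : int) (a b : 'I_n.+1),
      mono_adj E a b /\ u = k * (n.+1)%:Z + (a : nat)%:Z /\ v = k * (n.+1)%:Z + (b : nat)%:Z)
  \/ (exists k : int,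
      (u = k * (n.+1)%:Z - 1 /\ v = k * (n.+1)%:Z) \/
      (v = k * (n.+1)%:Z - 1 /\ u = k * (n.+1)%:Z)).

Definition atom_of (n : nat) (u : int) : 'I_n.+1 := inord `|(u %% (n.+1)%:Z)%Z|%N.

Definition poly_ea (n : nat) {EA : Type} (eatt : 'I_n.+1 -> 'I_n.+1 -> EA) (link : EA)
  (u v : int) : EA :=
  if ((v == u + 1) && ((n.+1)%:Z %| v)%Z) || ((u == v + 1) && ((n.+1)%:Z %| u)%Z)
  then link else eatt (atom_of n u) (atom_of n v).

Definition star_ea (n : nat) {EA : Type} (eatt : 'I_n.+1 -> 'I_n.+1 -> EA) (link : EA)
  (a b : 'I_n.+1) : EA :=
  if ((a == ord0) && (b == ord_max)) || ((a == ord_max) && (b == ord0))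
  then link else eatt a b.

Definition mean_pool_poly (R : realType) (d n : nat) (h : int -> 'cV[R]_d) : 'cV[R]_d :=
  (n.+1)%:R^-1 *: \sum_(a < n.+1) h (a : nat)%:Z.

Definition mean_pool_star (R : realType) (d n : nat) (h : 'I_n.+1 -> 'cV[R]_d) : 'cV[R]_d :=
  (n.+1)%:R^-1 *: \sum_(a < n.+1) h a.

(* Main.v *)
Require Import Defs.
From HB Require Import structures.
From mathcomp Require Import all_boot all_order all_algebra.
From mathcomp Require Import all_classical all_reals all_analysis.
From mathcomp Require Import zify.
Set Implicit Arguments. Unset Strict Implicit. Unset Printing Implicit Defensive.
Import Order.TTheory GRing.Theory Num.Theory.
Local Open Scope classical_set_scope.
Local Open Scope ring_scope.

Lemma chainP_cat (V : Type) (adj : V -> V -> Prop) u q1 q2 :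
  chainP adj u (q1 ++ q2) <-> chainP adj u q1 /\ chainP adj (last u q1) q2.
Proof.
elim: q1 u => [|w q IH] u /=; first by tauto.
split=> [[a /IH [b c]]|[[a b] c]]; first by [].
by split=> //; apply/IH.
Qed.

Lemma last_rev_belast (V : Type) (w : V) q : last (last w q) (rev (belast w q)) = w.
Proof. by case: q => [|x q] //=; rewrite rev_cons last_rcons. Qed.

Lemma chainP_rev (V : Type) (adj : V -> V -> Prop) :
  (forall x y, adj x y -> adj y x) ->
  forall q u, chainP adj u q -> chainP adj (last u q) (rev (belast u q)).
Proof.
move=> sym; elim=> [|w q IH] u //= [a c].
rewrite rev_cons -cats1; apply/chainP_cat; split; first exact: IH.
by rewrite last_rev_belast /=; split=> //; apply: sym.
Qed.

Lemma walk_rev (V : Type) (adj : V -> V -> Prop) i j p :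
  (forall x y, adj x y -> adj y x) ->
  is_walk adj i j p -> is_walk adj j i (rev p) /\ walk_length (rev p) = walk_length p.
Proof.
move=> sym; case: p => [|u q] //= [-> [<- c]].
have -> : rev (i :: q) = last i q :: rev (belast i q) by rewrite lastI rev_rcons.
rewrite /walk_length /= size_rev size_belast; split=> //.
by split=> //; split; [exact: last_rev_belast | exact: chainP_rev].
Qed.

Lemma chainP_map (V W : Type) (adj : V -> V -> Prop) (adj' : W -> W -> Prop) (f : V -> W) :
  (forall x y, adj x y -> adj' (f x) (f y)) ->
  forall q u, chainP adj u q -> chainP adj' (f u) (map f q).
Proof. by move=> H; elim=> [|w q IH] u //= [a c]; split; [apply: H | apply: IH]. Qed.

Lemma walk_map (V W : Type) (adj : V -> V -> Prop) (adj' : W -> W -> Prop) (f : V -> W) i j p :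
  (forall x y, adj x y -> adj' (f x) (f y)) ->
  is_walk adj i j p -> is_walk adj' (f i) (f j) (map f p) /\ walk_length (map f p) = walk_length p.
Proof.
move=> H; case: p => [|u q] //= [-> [<- c]].
split; last by rewrite /walk_length /= size_map.
split=> //; split; [by rewrite last_map | exact: (chainP_map H c)].
Qed.

           
Lemma atom_of_val n (k : int) (a : 'I_n.+1) : atom_of n (k * (n.+1)%:Z + (a : nat)%:Z) = a.
Proof.
apply: val_inj; rewrite /atom_of /=.
rewrite modzMDl modz_small; last by apply/andP; split=> //; rewrite ltz_nat.
by rewrite absz_nat inordK.
Qed.

Lemma div_val n (k : int) (a : 'I_n.+1) : ((k * (n.+1)%:Z + (a : nat)%:Z) %/ (n.+1)%:Z)%Z = k.
Proof.
rewrite divzMDl // divz_small ?addr0 //.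
by apply/andP; split=> //; rewrite absz_nat ltz_nat.
Qed.

Lemma decomp n (u : int) : u = (u %/ (n.+1)%:Z)%Z * (n.+1)%:Z + ((atom_of n u : nat))%:Z.
Proof.
rewrite {1}(divz_eq u (n.+1)%:Z); congr (_ + _).
have h0 : 0 <= (u %% (n.+1)%:Z)%Z by apply: modz_ge0.
have h1 : (u %% (n.+1)%:Z)%Z < (n.+1)%:Z by apply: ltz_pmod.
rewrite /atom_of inordK; first by rewrite gez0_abs.
by rewrite -ltz_nat gez0_abs.
Qed.

Lemma atom_link n (k : int) : atom_of n (k * (n.+1)%:Z - 1) = ord_max.
Proof.
have -> : k * (n.+1)%:Z - 1 = (k - 1) * (n.+1)%:Z + ((@ord_max n : nat))%:Z.
  rewrite /=; lia.
exact: atom_of_val.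
Qed.

Lemma atom_blk n (k : int) : atom_of n (k * (n.+1)%:Z) = ord0.
Proof. by have := atom_of_val k (@ord0 n); rewrite /= addr0. Qed.
Lemma mono_sym n (E : rel 'I_n.+1) a b : mono_adj E a b -> mono_adj E b a.
Proof. by rewrite /mono_adj; tauto. Qed.

Lemma star_sym n (E : rel 'I_n.+1) a b : star_adj E a b -> star_adj E b a.
Proof. by rewrite /star_adj => -[/mono_sym|[]]; tauto. Qed.

Lemma poly_sym n (E : rel 'I_n.+1) u v : poly_adj E u v -> poly_adj E v u.
Proof.
rewrite /poly_adj => -[[k [a [b [m [-> ->]]]]]|[k H]].
  by left; exists k, b, a; split=> //; apply: mono_sym.
by right; exists k; tauto.
Qed.

Lemma proj_adj n (E : rel 'I_n.+1) u v :
  poly_adj E u v -> star_adj E (atom_of n u) (atom_of n v).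
Proof.
rewrite /poly_adj /star_adj => -[[k [a [b [m [-> ->]]]]]|[k [[-> ->]|[-> ->]]]].
- by left; rewrite !atom_of_val.
- by right; right; rewrite atom_link atom_blk.
- by right; left; rewrite atom_link atom_blk.
Qed.

Lemma lift_adj n (E : rel 'I_n.+1) u b :
  star_adj E (atom_of n u) b -> exists v, poly_adj E u v /\ atom_of n v = b.
Proof.
set k := (u %/ (n.+1)%:Z)%Z.
have du := decomp n u; rewrite -/k in du.
rewrite /star_adj => -[m|[[a0 ->]|[am ->]]].
- exists (k * (n.+1)%:Z + (b : nat)%:Z); rewrite atom_of_val; split=> //.
  by left; exists k, (atom_of n u), b.
- exists (k * (n.+1)%:Z - 1); rewrite atom_link; split=> //.
  right; exists k; right; split=> //.
  by rewrite du a0 /= addr0.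
- exists ((k + 1) * (n.+1)%:Z); rewrite atom_blk; split=> //.
  right; exists (k + 1); left; split=> //.
  rewrite du am /=; lia.
Qed.
Definition reachb n (E : rel 'I_n.+1) (m : nat) (b : 'I_n.+1) : bool :=
  `[< dist_lt (mono_adj E) m.+1 ord0 b >].

Definition fpot n (E : rel 'I_n.+1) (t : nat) (b : 'I_n.+1) : nat :=
  (\sum_(m < 2 * t) ~~ reachb E m b)%N.

Definition hpot n (E : rel 'I_n.+1) (t : nat) (u : int) : int :=
  (u %/ (n.+1)%:Z)%Z * (2 * t)%N%:Z + (fpot E t (atom_of n u))%:Z.

Lemma reach_step n (E : rel 'I_n.+1) m a b :
  mono_adj E a b -> dist_lt (mono_adj E) m.+1 ord0 b -> dist_lt (mono_adj E) m.+2 ord0 a.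
Proof.
move=> ab [p [w lt]]; case: p w lt => [|u q] //= [eu [eb c]] lt.
subst u b.
exists (rcons (ord0 :: q) a); split.
  rewrite /= last_rcons; split=> //; split=> //.
  rewrite -cats1; apply/chainP_cat; split=> //=; split=> //; exact: mono_sym.
by rewrite /walk_length size_rcons /=.
Qed.

Lemma fpot_lip n (E : rel 'I_n.+1) t a b :
  (1 <= t)%N -> mono_adj E a b -> (fpot E t a <= (fpot E t b).+1)%N.
Proof.
move=> t1 ab; rewrite /fpot.
have -> : (2 * t = (2 * t).-1.+1)%N by lia.
rewrite big_ord_recl big_ord_recr /=.
set A := (\sum_(i < _) ~~ reachb E (bump 0 i) a)%N.
set B := (\sum_(i < _) ~~ reachb E i b)%N.
suff : (A <= B)%N.
  have := leq_b1 (~~ reachb E 0 a); lia.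
apply: leq_sum => i _.
case: (boolP (reachb E i b)) => [/asboolP H|]; last by move=> _; exact: leq_b1.
rewrite /bump leq0n add1n; have : reachb E i.+1 a by apply/asboolP; exact: reach_step ab H.
by move=> ->.
Qed.

Lemma fpot0 n (E : rel 'I_n.+1) t : fpot E t ord0 = 0%N.
Proof.
rewrite /fpot big1 // => i _.
have -> : reachb E i ord0 = true.
  by apply/asboolP; exists [:: ord0]; split.
by [].
Qed.

Lemma fpotmax n (E : rel 'I_n.+1) t :
  dist_gt (mono_adj E) (2 * t - 1) ord0 ord_max -> fpot E t ord_max = (2 * t)%N.
Proof.
move=> dg; rewrite /fpot (eq_bigr (fun _ => 1%N)).
  by rewrite sum_nat_const card_ord muln1.
move=> i _; have -> : reachb E i ord_max = false; last by [].
apply/asboolP => -[p [w l]]; have := dg p w.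
have := ltn_ord i; lia.
Qed.

Lemma hpot_val n (E : rel 'I_n.+1) t (k : int) (a : 'I_n.+1) :
  hpot E t (k * (n.+1)%:Z + (a : nat)%:Z) = k * (2 * t)%N%:Z + (fpot E t a)%:Z.
Proof. by rewrite /hpot div_val atom_of_val. Qed.

Lemma hpot_adj n (E : rel 'I_n.+1) t u v :
  (1 <= t)%N -> dist_gt (mono_adj E) (2 * t - 1) ord0 ord_max ->
  poly_adj E u v -> hpot E t u <= hpot E t v + 1.
Proof.
move=> t1 dg; rewrite /poly_adj => -[[k [a [b [m [-> ->]]]]]|[k H]].
  rewrite !hpot_val; have := @fpot_lip n E t a b t1 m; lia.
have e1 : hpot E t (k * (n.+1)%:Z) = k * (2 * t)%N%:Z.
  by have := hpot_val E t k ord0; rewrite /= addr0 fpot0 addr0.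
have e2 : hpot E t (k * (n.+1)%:Z - 1) = k * (2 * t)%N%:Z.
  have -> : k * (n.+1)%:Z - 1 = (k - 1) * (n.+1)%:Z + ((@ord_max n : nat))%:Z.
    rewrite /=; lia.
  rewrite hpot_val fpotmax //; lia.
case: H => -[-> ->]; rewrite e1 e2; lia.
Qed.

Lemma hpot_chain n (E : rel 'I_n.+1) t :
  (1 <= t)%N -> dist_gt (mono_adj E) (2 * t - 1) ord0 ord_max ->
  forall q u, chainP (poly_adj E) u q ->
  hpot E t u <= hpot E t (last u q) + (size q)%:Z /\
  hpot E t (last u q) <= hpot E t u + (size q)%:Z.
Proof.
move=> t1 dg; elim=> [|w q IH] u /=; first by move=> _; lia.
move=> [a /IH [h1 h2]].
have := hpot_adj t1 dg a; have := hpot_adj t1 dg (poly_sym a); lia.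
Qed.

Lemma hpot_walk n (E : rel 'I_n.+1) t i j p :
  (1 <= t)%N -> dist_gt (mono_adj E) (2 * t - 1) ord0 ord_max ->
  is_walk (poly_adj E) i j p ->
  hpot E t i <= hpot E t j + (walk_length p)%:Z /\
  hpot E t j <= hpot E t i + (walk_length p)%:Z.
Proof.
move=> t1 dg; case: p => [|u q] //= [-> [<- c]].
by rewrite /walk_length /=; apply: hpot_chain.
Qed.

Lemma ball_inj n (E : rel 'I_n.+1) t i i' j :
  (1 <= t)%N -> dist_gt (mono_adj E) (2 * t - 1) ord0 ord_max ->
  dist_lt (poly_adj E) t i j -> dist_lt (poly_adj E) t i' j ->
  atom_of n i = atom_of n i' -> i = i'.
Proof.
move=> t1 dg [p [w l]] [p' [w' l']] ea.
have [h1 h2] := hpot_walk t1 dg w; have [h3 h4] := hpot_walk t1 dg w'.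
rewrite (decomp n i) (decomp n i') in h1 h2 h3 h4 *.
rewrite ea !hpot_val -ea in h1 h2 h3 h4 *.
set b := (i %/ _)%Z in h1 h2 h3 h4 *.
set b' := (i' %/ _)%Z in h1 h2 h3 h4 *.
suff -> : b = b' by [].
move: h1 h2 h3 h4 l l'; rewrite ea; nia.
Qed.
Lemma lift_chain n (E : rel 'I_n.+1) :
  forall q u, chainP (star_adj E) (atom_of n u) q ->
  exists p, map (atom_of n) p = q /\ chainP (poly_adj E) u p.
Proof.
elim=> [|b q IH] u /=; first by move=> _; exists [::].
move=> [/lift_adj [v [uv <-]] c].
have [p [ep cp]] := IH v c.
by exists (v :: p); rewrite /= ep.
Qed.

Lemma lift_walk_to n (E : rel 'I_n.+1) a j q :
  is_walk (star_adj E) a (atom_of n j) q ->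
  exists i p, atom_of n i = a /\ is_walk (poly_adj E) i j p /\ walk_length p = walk_length q.
Proof.
move=> w; have [w' l'] := walk_rev (@star_sym n E) w.
move: w' l'; case: (rev q) => [|x q'] //= [ex [ea c]] l'; subst x.
have [p [ep cp]] := lift_chain c.
have wp : is_walk (poly_adj E) j (last j p) (j :: p) by [].
have [wr lr] := walk_rev (@poly_sym n E) wp.
exists (last j p), (rev (j :: p)); split.
  by rewrite -ea -ep last_map.
split=> //; rewrite lr -l' /walk_length /= -ep size_map //.
Qed.

Lemma ball_image n (E : rel 'I_n.+1) t (j : int) :
  [set a | dist_lt (star_adj E) t a (atom_of n j)] =
  atom_of n @` [set i | dist_lt (poly_adj E) t i j].
Proof.
apply/seteqP; split=> [a /= [q [w l]]|_ [i /= [p [w l]] <-]].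
  have [i [p [ei [wp lp]]]] := lift_walk_to w.
  by exists i => //; exists p; rewrite lp.
have [ws ls] := walk_map (@proj_adj n E) w.
by exists (map (atom_of n) p); rewrite ls.
Qed.

Lemma gdist_eq n (E : rel 'I_n.+1) t i j :
  (1 <= t)%N -> dist_gt (mono_adj E) (2 * t - 1) ord0 ord_max ->
  dist_lt (poly_adj E) t i j ->
  gdist (poly_adj E) i j = gdist (star_adj E) (atom_of n i) (atom_of n j).
Proof.
move=> t1 dg ball; rewrite /gdist; congr (xget _ _).
apply/funext => D; apply/propext; rewrite /is_gdist; split.
- move=> [[p [w l]] mn]; split.
    have [ws ls] := walk_map (@proj_adj n E) w.
    by exists (map (atom_of n) p); rewrite ls.
  move=> q wq.
  have [p0 [w0 l0]] := ball; have := mn _ w0 => Dp0.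
  case: (ltnP (walk_length q) t) => lq; last by lia.
  have [i' [p1 [ei [wp lp]]]] := lift_walk_to wq.
  have dl : dist_lt (poly_adj E) t i' j by exists p1; rewrite lp.
  have ii : i' = i := ball_inj t1 dg dl ball ei.
  subst i'; rewrite -lp; exact: mn.
- move=> [[q [wq lq]] mn]; split.
    have [p0 [w0 l0]] := ball.
    have [ws ls] := walk_map (@proj_adj n E) w0.
    have := mn _ ws; rewrite ls => Dl.
    have [i' [p [ei [wp lp]]]] := lift_walk_to wq.
    have dl : dist_lt (poly_adj E) t i' j by exists p; split=> //; rewrite lp; lia.
    have ii : i' = i := ball_inj t1 dg dl ball ei.
    by subst i'; exists p; rewrite lp.
  move=> p w.
  have [ws ls] := walk_map (@proj_adj n E) w.
  by rewrite -ls; apply: mn.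
Qed.
Lemma dvd_atom n (v : int) : ((n.+1)%:Z %| v)%Z -> atom_of n v = ord0.
Proof. by move=> /dvdz_mod0P h; apply: val_inj; rewrite /atom_of h /= inordK. Qed.

Lemma no_bond n (E : rel 'I_n.+1) t :
  (1 <= t)%N -> dist_gt (mono_adj E) (2 * t - 1) ord0 ord_max ->
  ~ mono_adj E ord0 ord_max.
Proof.
move=> t1 dg m; have := dg [:: ord0; ord_max].
have : is_walk (mono_adj E) ord0 ord_max [:: ord0; ord_max] by [].
move=> /[swap] /[apply]; rewrite /walk_length /=; lia.
Qed.

Lemma ea_eq n (E : rel 'I_n.+1) t (EA : Type) (eatt : 'I_n.+1 -> 'I_n.+1 -> EA) link u v :
  (1 <= t)%N -> dist_gt (mono_adj E) (2 * t - 1) ord0 ord_max ->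
  poly_adj E u v -> poly_ea eatt link u v = star_ea eatt link (atom_of n u) (atom_of n v).
Proof.
move=> t1 dg; have nb := no_bond t1 dg.
rewrite /poly_adj /poly_ea /star_ea => -[[k [a [b [m [-> ->]]]]]|[k [[-> ->]|[-> ->]]]].
- rewrite !atom_of_val.
  case: ifP => [/orP [/andP [/eqP e /dvd_atom]|/andP [/eqP e /dvd_atom]]|_].
  + rewrite atom_of_val => hb; move/(congr1 val): hb e => /= ->; lia.
  + rewrite atom_of_val => hb; move/(congr1 val): hb e => /= ->; lia.
  case: ifP => // /orP [/andP [/eqP ea /eqP eb]|/andP [/eqP ea /eqP eb]]; subst a b.
  + by case: nb.
  + by case: nb; apply: mono_sym.
- rewrite atom_link atom_blk subrK eqxx /= dvdz_mull ?dvdzz //=.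
  by rewrite !eqxx orbT.
- rewrite atom_link atom_blk subrK eqxx /= dvdz_mull ?dvdzz ?orbT //=.
  by rewrite !eqxx.
Qed.

Lemma path_edges_cons (V EA : Type) (ea : V -> V -> EA) u w q :
  path_edges ea (u :: w :: q) = ea u w :: path_edges ea (w :: q).
Proof. by []. Qed.

Lemma pe_eq n (E : rel 'I_n.+1) t (EA : Type) (eatt : 'I_n.+1 -> 'I_n.+1 -> EA) link :
  (1 <= t)%N -> dist_gt (mono_adj E) (2 * t - 1) ord0 ord_max ->
  forall q u, chainP (poly_adj E) u q ->
  path_edges (poly_ea eatt link) (u :: q) =
  path_edges (star_ea eatt link) (map (atom_of n) (u :: q)).
Proof.
move=> t1 dg; elim=> [|w q IH] u //= [a c].
rewrite path_edges_cons IH // (ea_eq eatt link t1 dg a).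
by [].
Qed.
Lemma lga_step (R : realType) (d n : nat) (NA EA : Type)
  (E : rel 'I_n.+1) (natt : 'I_n.+1 -> NA) (eatt : 'I_n.+1 -> 'I_n.+1 -> EA) (link : EA)
  (t : nat) (selp : int -> int -> seq int) (sels : 'I_n.+1 -> 'I_n.+1 -> seq 'I_n.+1)
  WQ WK WV fd fp (xp : int -> 'cV[R]_d) (xs : 'I_n.+1 -> 'cV[R]_d) :
  (1 <= t)%N ->
  dist_gt (mono_adj E) (2 * t - 1) ord0 ord_max ->
  (forall i j : int, dist_lt (poly_adj E) t i j ->
     is_shortest_path (poly_adj E) i j (selp i j)) ->
  (forall i j : int, dist_lt (poly_adj E) t i j ->
     map (atom_of n) (selp i j) = sels (atom_of n i) (atom_of n j)) ->
  (forall u, xp u = xs (atom_of n u)) ->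
  forall j, lga (poly_adj E) (fun u => natt (atom_of n u)) (poly_ea eatt link) selp t WQ WK WV fd fp xp j
   = lga (star_adj E) natt (star_ea eatt link) sels t WQ WK WV fd fp xs (atom_of n j).
Proof.
move=> t1 dg hsp hsel hx j.
rewrite /lga /= ball_image.
have inj : set_inj [set i | dist_lt (poly_adj E) t i j] (atom_of n).
  by move=> i i' /set_mem hi /set_mem hi' e; exact: ball_inj t1 dg hi hi' e.
rewrite !fsbig_image //.
have key : forall i, dist_lt (poly_adj E) t i j ->
  fp [seq natt (atom_of n u) | u <- selp i j] (path_edges (poly_ea eatt link) (selp i j)) =
  fp [seq natt a | a <- sels (atom_of n i) (atom_of n j)]
     (path_edges (star_ea eatt link) (sels (atom_of n i) (atom_of n j))).
  move=> i hi; rewrite -(hsel i j hi) -map_comp.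
  have [w _] := hsp i j hi.
  move: w; case: (selp i j) => [|u q] // [_ [_ c]].
  by rewrite (pe_eq eatt link t1 dg c).
congr (_^-1 *: _); apply: eq_fsbigr => i /set_mem hi.
  by rewrite !hx (gdist_eq t1 dg hi) key.
by rewrite !hx (gdist_eq t1 dg hi) key.
Qed.
Lemma run_eq (R : realType) (d n : nat) (NA EA : Type)
  (E : rel 'I_n.+1) (natt : 'I_n.+1 -> NA) (eatt : 'I_n.+1 -> 'I_n.+1 -> EA) (link : EA)
  (t : nat) (selp : int -> int -> seq int) (sels : 'I_n.+1 -> 'I_n.+1 -> seq 'I_n.+1) :
  (1 <= t)%N ->
  dist_gt (mono_adj E) (2 * t - 1) ord0 ord_max ->
  (forall i j : int, dist_lt (poly_adj E) t i j ->
     is_shortest_path (poly_adj E) i j (selp i j)) ->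
  (forall i j : int, dist_lt (poly_adj E) t i j ->
     map (atom_of n) (selp i j) = sels (atom_of n i) (atom_of n j)) ->
  forall (ls : seq (layer R d NA EA)) (xp : int -> 'cV[R]_d) (xs : 'I_n.+1 -> 'cV[R]_d),
  (forall u, xp u = xs (atom_of n u)) ->
  forall u, run_layers (poly_adj E) (fun u => natt (atom_of n u)) (poly_ea eatt link) selp t ls xp u
   = run_layers (star_adj E) natt (star_ea eatt link) sels t ls xs (atom_of n u).
Proof.
move=> t1 dg hsp hsel; elim=> [|l ls IH] xp xs hx //=.
apply: IH; case: l => [WQ WK WV fd fp|f] /= u.
  exact: lga_step.
by rewrite hx.
Qed.

Unset Implicit Arguments.
Theorem theorem2 (R : realType) (d n : nat) (NA EA : Type)
  (E : rel 'I_n.+1) (X : 'I_n.+1 -> 'cV[R]_d)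
  (natt : 'I_n.+1 -> NA) (eatt : 'I_n.+1 -> 'I_n.+1 -> EA) (link : EA)
  (t : nat) (ls : seq (layer R d NA EA))
  (selp : int -> int -> seq int) (sels : 'I_n.+1 -> 'I_n.+1 -> seq 'I_n.+1) :
  (1 <= t)%N ->
  dist_gt (mono_adj E) (2 * t - 1) ord0 ord_max ->
  (forall i j : int, dist_lt (poly_adj E) t i j ->
     is_shortest_path (poly_adj E) i j (selp i j)) ->
  (forall a b : 'I_n.+1, dist_lt (star_adj E) t a b ->
     is_shortest_path (star_adj E) a b (sels a b)) ->
  (forall i j : int, dist_lt (poly_adj E) t i j ->
     map (atom_of n) (selp i j) = sels (atom_of n i) (atom_of n j)) ->
  mean_pool_poly n
    (run_layers (poly_adj E) (fun u => natt (atom_of n u)) (poly_ea eatt link) selp t ls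
       (fun u => X (atom_of n u)))
  = mean_pool_star
    (run_layers (star_adj E) natt (star_ea eatt link) sels t ls X).
Proof.
move=> t1 dg hsp _ hsel.
rewrite /mean_pool_poly /mean_pool_star; congr (_ *: _).
apply: eq_bigr => a _.
rewrite (@run_eq R d n NA EA E natt eatt link t selp sels t1 dg hsp hsel ls (fun u => X (atom_of n u)) X (fun=> erefl)).
by have := atom_of_val 0 a; rewrite mul0r add0r => ->.
Qed.
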